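(* Let $X$ be a real Hilbert space, $f,g:X\to\mathbb{R}\cup\{+\infty\}$ proper $\Phi_{lsc}$-convex functions and $\alpha\in\mathbb{R}$. If there exist $\varphi_1\in\mathrm{supp}(f)$ and $\varphi_2\in\mathrm{supp}(g)$ with $\{x:\varphi_1(x)<\alpha\}\cap\{x:\varphi_2(x)<\alpha\}=\emptyset$, then for every $\varepsilon>0$ there exist $x_1\in\mathrm{dom}(f)$ and $x_2\in\mathrm{dom}(g)$ such that $f$ and $g$ satisfy $ZS(\varepsilon,x_1,x_2)$, i.e. $0\in\mathrm{co}\big(\partial^\varepsilon_{lsc}f(x_1)\cup\partial^\varepsilon_{lsc}g(x_2)\big)$.
   Context: $\Phi_{lsc}$ is the class of functions $\varphi(x)=-a\|x\|^2+\langle v,x\rangle+c$ ($a\ge0$, $v\in X^*$, $c\in\mathbb{R}$); $\mathrm{supp}(f)=\{\varphi\in\Phi_{lsc}:\varphi\le f\}$; $f$ is $\Phi_{lsc}$-convex if $f=\sup\mathrm{supp}(f)$ pointwise; proper means $\mathrm{supp}(f)\ne\emptyset$ and $\mathrm{dom}(f)\ne\emptyset$. For $\varepsilon\ge0$, $\partial^\varepsilon_{lsc}f(\bar x)$ is the set of $(a,v)\in\mathbb{R}_+\times X^*$ with $f(x)-f(\bar x)\ge\langle v,x-\bar x\rangle-a\|x\|^2+a\|\bar x\|^2-\varepsilon$ for all $x\in X$; convex hull $\mathrm{co}$ is taken in $\mathbb{R}\times X^*$ and $0$ means $(0,0)$. *)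

(* Defs.v *)
From Stdlib Require Import Reals List.
Import ListNotations.
Open Scope R_scope.

Record Hilbert := {
  HT :> Type;
  hadd : HT -> HT -> HT;
  hopp : HT -> HT;
  hzero : HT;
  hscal : R -> HT -> HT;
  hinner : HT -> HT -> R;
  hadd_assoc : forall x y z, hadd x (hadd y z) = hadd (hadd x y) z;
  hadd_comm : forall x y, hadd x y = hadd y x;
  hadd_zero : forall x, hadd x hzero = x;
  hadd_opp : forall x, hadd x (hopp x) = hzero;
  hscal_one : forall x, hscal 1 x = x;
  hscal_assoc : forall a b x, hscal a (hscal b x) = hscal (a * b) x;
  hscal_distr_l : forall a x y, hscal a (hadd x y) = hadd (hscal a x) (hscal a y);
  hscal_distr_r : forall a b x, hscal (a + b) x = hadd (hscal a x) (hscal b x);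
  hinner_sym : forall x y, hinner x y = hinner y x;
  hinner_add : forall x y z, hinner (hadd x y) z = hinner x z + hinner y z;
  hinner_scal : forall a x y, hinner (hscal a x) y = a * hinner x y;
  hinner_pos : forall x, 0 <= hinner x x;
  hinner_def : forall x, hinner x x = 0 -> x = hzero;
  hcomplete : forall u : nat -> HT,
    (forall eps, 0 < eps -> exists N, forall n m, (N <= n)%nat -> (N <= m)%nat ->
        sqrt (hinner (hadd (u n) (hopp (u m))) (hadd (u n) (hopp (u m)))) < eps) ->
    exists l, forall eps, 0 < eps -> exists N, forall n, (N <= n)%nat ->
        sqrt (hinner (hadd (u n) (hopp l)) (hadd (u n) (hopp l))) < eps
}.

Definition hnorm (X : Hilbert) (x : X) : R := sqrt (hinner X x x).
Definition hsub (X : Hilbert) (x y : X) : X := hadd X x (hopp X y).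

Definition is_dual (X : Hilbert) (v : X -> R) : Prop :=
  (forall x y, v (hadd X x y) = v x + v y) /\
  (forall a x, v (hscal X a x) = a * v x) /\
  (exists M, forall x, Rabs (v x) <= M * hnorm X x).

(* Extended-real-valued functions X -> R ∪ {+∞}; None stands for +∞. *)
Definition ERfun (X : Hilbert) := X -> option R.

Definition ler_ext (r : R) (e : option R) : Prop :=
  match e with Some s => r <= s | None => True end.

Definition dom (X : Hilbert) (f : ERfun X) : X -> Prop :=
  fun x => exists r, f x = Some r.

(* An element of Φ_lsc, given by parameters (a, v, c) with a >= 0, v ∈ X^*. *)
Definition Phi_lsc (X : Hilbert) (a : R) (v : X -> R) (c : R) : Prop :=
  0 <= a /\ is_dual X v.

Definition phi_eval (X : Hilbert) (a : R) (v : X -> R) (c : R) (x : X) : R :=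
  - a * (hnorm X x) ^ 2 + v x + c.

Definition in_supp (X : Hilbert) (f : ERfun X) (a : R) (v : X -> R) (c : R) : Prop :=
  Phi_lsc X a v c /\ forall x, ler_ext (phi_eval X a v c x) (f x).

Definition supp_nonempty (X : Hilbert) (f : ERfun X) : Prop :=
  exists a v c, in_supp X f a v c.

Definition proper (X : Hilbert) (f : ERfun X) : Prop :=
  supp_nonempty X f /\ exists x, dom X f x.

(* f = sup supp(f) pointwise (sup in R ∪ {+∞}) *)
Definition Phi_lsc_convex (X : Hilbert) (f : ERfun X) : Prop :=
  forall x,
    let S := fun y => exists a v c, in_supp X f a v c /\ y = phi_eval X a v c x in
    match f x with
    | Some r => is_lub S r
    | None => forall M, exists y, S y /\ M < y
    end.

Definition eps_subdiff (X : Hilbert) (f : ERfun X) (eps : R) (xb : X)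
    (a : R) (v : X -> R) : Prop :=
  match f xb with
  | None => False
  | Some fxb =>
      0 <= a /\ is_dual X v /\
      forall x, ler_ext (fxb + v (hsub X x xb) - a * (hnorm X x) ^ 2
                         + a * (hnorm X xb) ^ 2 - eps) (f x)
  end.

(* (0,0) ∈ co(A) for A ⊆ R × X^*, co = set of finite convex combinations *)
Definition zero_in_co (X : Hilbert) (A : R -> (X -> R) -> Prop) : Prop :=
  exists l : list (R * (R * (X -> R))),
    l <> [] /\
    Forall (fun p => 0 <= fst p /\ A (fst (snd p)) (snd (snd p))) l /\
    fold_right (fun p s => fst p + s) 0 l = 1 /\
    fold_right (fun p s => fst p * fst (snd p) + s) 0 l = 0 /\
    (forall x, fold_right (fun p s => fst p * snd (snd p) x + s) 0 l = 0).

Definition ZS (X : Hilbert) (f g : ERfun X) (eps : R) (x1 x2 : X) : Prop :=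
  zero_in_co X (fun a v => eps_subdiff X f eps x1 a v \/ eps_subdiff X g eps x2 a v).

(* Main.v *)
Require Import Defs.
From Stdlib Require Import Reals Lra Classical List.
Import ListNotations.
Open Scope R_scope.

Lemma Q1 (A B C al : R) : 0 <= A -> (0 < A \/ B < 0) ->
  exists T, forall t, T <= t -> - A * t ^ 2 + B * t + C < al.
Proof.
  intros HA [HA'|HB].
  - exists ((Rabs B + Rabs (C - al) + 1) / A + 1). intros t Ht.
    assert (H1 : 1 <= t). { assert (0 <= (Rabs B + Rabs (C - al) + 1) / A).
      { apply Rle_mult_inv_pos; [pose proof (Rabs_pos B); pose proof (Rabs_pos (C-al)); lra|lra]. } lra. }
    assert (H2 : A * t >= Rabs B + Rabs (C - al) + 1).
    { assert (A * ((Rabs B + Rabs (C - al) + 1) / A) = Rabs B + Rabs (C - al) + 1) by (field; lra).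
      assert (A * t >= A * ((Rabs B + Rabs (C - al) + 1) / A + 1)) by nra. nra. }
    pose proof (Rle_abs B). pose proof (Rle_abs (C - al)).
    pose proof (Rabs_pos B). pose proof (Rabs_pos (C-al)).
    assert (A * t * t >= (Rabs B + Rabs (C - al) + 1) * t) by nra.
    simpl. nra.
  - exists ((Rabs (C - al) + 1) / (- B)). intros t Ht.
    pose proof (Rle_abs (C - al)). pose proof (Rabs_pos (C-al)).
    assert (-B * ((Rabs (C - al) + 1) / (- B)) = Rabs (C - al) + 1) by (field; lra).
    assert (-B * t >= Rabs (C - al) + 1) by nra.
    assert (0 <= A * t^2) by (apply Rmult_le_pos; [lra| apply pow2_ge_0]).
    nra.
Qed.
Section S.
Variable X : Hilbert.

Lemma v_zero v : is_dual X v -> v (hzero X) = 0.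
Proof. intros [Ha _]. pose proof (Ha (hzero X) (hzero X)). rewrite hadd_zero in H. lra. Qed.

Lemma v_sub v x y : is_dual X v -> v (hsub X x y) = v x - v y.
Proof. intros Hd. pose proof (v_zero v Hd). destruct Hd as [Ha _]. unfold hsub.
  rewrite Ha. pose proof (Ha y (hopp X y)). rewrite hadd_opp in H0. lra. Qed.

Lemma v_lin2 v t z s w : is_dual X v ->
  v (hadd X (hscal X t z) (hscal X s w)) = t * v z + s * v w.
Proof. intros [Ha [Hs _]]. rewrite Ha, !Hs. ring. Qed.

Lemma norm_scal t d : hnorm X (hscal X t d) ^ 2 = t ^ 2 * hinner X d d.
Proof. unfold hnorm. simpl. rewrite Rmult_1_r, sqrt_sqrt by apply hinner_pos.
  rewrite hinner_scal, hinner_sym, hinner_scal. ring. Qed.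

Lemma phi_scal a v c t d : is_dual X v ->
  phi_eval X a v c (hscal X t d) = - (a * hinner X d d) * t ^ 2 + v d * t + c.
Proof. intros [_ [Hs _]]. unfold phi_eval. rewrite norm_scal, Hs. ring. Qed.

Lemma zero_dual : is_dual X (fun _ => 0).
Proof. split; [intros; ring| split; [intros; ring|]]. exists 0. intros. rewrite Rabs_R0. lra. Qed.

Lemma ler_mono r r' e : r <= r' -> ler_ext r' e -> ler_ext r e.
Proof. destruct e; simpl; lra. Qed.

Lemma lemA (f : ERfun X) v c eps : 0 < eps -> is_dual X v ->
  (forall x, ler_ext (v x + c) (f x)) -> (exists x, dom X f x) ->
  exists x1, dom X f x1 /\ eps_subdiff X f eps x1 0 v.
Proof.
  intros He Hd Hb [x0 [r0 Hx0]].
  set (S := fun y => exists x r, f x = Some r /\ y = v x - r).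
  assert (Hub : bound S). { exists (- c). intros y [x [r [E ->]]].
    pose proof (Hb x) as B. rewrite E in B. simpl in B. lra. }
  assert (Hne : exists y, S y). { exists (v x0 - r0). exists x0, r0. auto. }
  destruct (completeness S Hub Hne) as [M [HM1 HM2]].
  assert (exists x1 r1, f x1 = Some r1 /\ M - eps < v x1 - r1) as [x1 [r1 [E1 L1]]].
  { apply NNPP. intro N. assert (M <= M - eps); [|lra]. apply HM2.
    intros y [x [r [E ->]]]. apply Rnot_lt_le. intro L. apply N. exists x, r. auto. }
  exists x1. split. { exists r1. auto. }
  unfold eps_subdiff. rewrite E1. split; [lra|]. split; [auto|].
  intro x. destruct (f x) as [r|] eqn:E; simpl; auto.
  rewrite v_sub by auto. assert (v x - r <= M) by (apply HM1; exists x, r; auto). lra.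
Qed.

Lemma one_elem (f g : ERfun X) eps v x1 x2 :
  eps_subdiff X f eps x1 0 v \/ eps_subdiff X g eps x2 0 v ->
  (forall x, v x = 0) -> ZS X f g eps x1 x2.
Proof.
  intros H Hv. exists [(1, (0, v))]. split; [discriminate|]. split.
  - constructor; [simpl; split; [lra|auto]|constructor].
  - simpl. split; [ring|]. split; [ring|]. intro x. rewrite Hv. ring.
Qed.

Lemma insupp0 f v c : in_supp X f 0 v c -> forall x, ler_ext (v x + c) (f x).
Proof. intros [_ H] x. eapply ler_mono; [|apply H]. unfold phi_eval. lra. Qed.

Lemma nonzero_pos d : d <> hzero X -> 0 < hinner X d d.
Proof. intro H. destruct (hinner_pos X d) as [|E]; auto. exfalso. apply H, hinner_def; auto. Qed.

End S.

Lemma along (X : Hilbert) a1 v1 c1 a2 v2 c2 al d :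
  is_dual X v1 -> is_dual X v2 -> 0 <= a1 -> 0 <= a2 ->
  (0 < a1 * hinner X d d \/ v1 d < 0) -> (0 < a2 * hinner X d d \/ v2 d < 0) ->
  (forall x, ~ (phi_eval X a1 v1 c1 x < al /\ phi_eval X a2 v2 c2 x < al)) -> False.
Proof.
  intros D1 D2 P1 P2 C1 C2 H.
  pose proof (hinner_pos X d).
  destruct (Q1 (a1 * hinner X d d) (v1 d) c1 al) as [T1 HT1]; [nra|auto|].
  destruct (Q1 (a2 * hinner X d d) (v2 d) c2 al) as [T2 HT2]; [nra|auto|].
  apply (H (hscal X (Rmax T1 T2) d)). rewrite !phi_scal by auto.
  split; [apply HT1, Rmax_l|apply HT2, Rmax_r].
Qed.

Theorem mainTheorem12 (X : Hilbert) (f g : ERfun X) (alpha : R) :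
  proper X f -> proper X g -> Phi_lsc_convex X f -> Phi_lsc_convex X g ->
  (exists a1 v1 c1 a2 v2 c2,
      in_supp X f a1 v1 c1 /\ in_supp X g a2 v2 c2 /\
      (forall x, ~ (phi_eval X a1 v1 c1 x < alpha /\ phi_eval X a2 v2 c2 x < alpha))) ->
  forall eps, 0 < eps ->
    exists x1 x2, dom X f x1 /\ dom X g x2 /\ ZS X f g eps x1 x2.
Proof.
  intros [_ Df] [_ Dg] _ _ [a1 [v1 [c1 [a2 [v2 [c2 [S1 [S2 H]]]]]]]] eps He.
  pose proof S1 as [[P1 D1] B1]. pose proof S2 as [[P2 D2] B2].
  assert (Hf : forall v c, is_dual X v -> (forall x, v x = 0) ->
            (forall x, ler_ext (v x + c) (f x)) -> exists x1 x2, dom X f x1 /\ dom X g x2 /\ ZS X f g eps x1 x2).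
  { intros v c Dv Hv Hb. destruct (lemA X f v c eps He Dv Hb Df) as [x1 [Dx1 E1]].
    destruct Dg as [x2 Dx2]. exists x1, x2. split; [auto|split; [auto|]].
    apply (one_elem X f g eps v x1 x2); auto. }
  assert (Hg : forall v c, is_dual X v -> (forall x, v x = 0) ->
            (forall x, ler_ext (v x + c) (g x)) -> exists x1 x2, dom X f x1 /\ dom X g x2 /\ ZS X f g eps x1 x2).
  { intros v c Dv Hv Hb. destruct (lemA X g v c eps He Dv Hb Dg) as [x2 [Dx2 E2]].
    destruct Df as [x1 Dx1]. exists x1, x2. split; [auto|split; [auto|]].
    apply (one_elem X f g eps v x1 x2); auto. }
  destruct (classic (forall x, x = hzero X)) as [Triv|NTriv].
  { apply (Hf (fun _ => 0) (phi_eval X a1 v1 c1 (hzero X))); [apply zero_dual|auto|].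
    intro x. rewrite (Triv x). eapply ler_mono; [|apply B1]. lra. }
  apply not_all_ex_not in NTriv. destruct NTriv as [e He0].
  pose proof (nonzero_pos X e He0) as Pe.
  assert (Neg : forall v, is_dual X v -> ~ (forall x, v x = 0) ->
             exists d, v d < 0 /\ 0 < hinner X d d).
  { intros v Dv N. apply not_all_ex_not in N. destruct N as [y Hy].
    assert (exists d, v d < 0) as [d Hd].
    { destruct (Rlt_or_le (v y) 0). exists y; auto. exists (hscal X (-1) y).
      destruct Dv as [_ [Hs _]]. rewrite Hs. lra. }
    exists d. split; auto. apply nonzero_pos. intro E. rewrite E, v_zero in Hd; auto. lra. }
  destruct (Rle_lt_or_eq_dec 0 a1 P1) as [A1|A1]; destruct (Rle_lt_or_eq_dec 0 a2 P2) as [A2|A2].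
  - exfalso. apply (along X a1 v1 c1 a2 v2 c2 alpha e); auto; left; nra.
  - subst a2. destruct (classic (forall x, v2 x = 0)) as [Z|NZ].
    + apply (Hg v2 c2); auto. apply insupp0; auto.
    + exfalso. destruct (Neg v2 D2 NZ) as [d [Hd Pd]].
      apply (along X a1 v1 c1 0 v2 c2 alpha d); auto; try lra; left; nra.
  - subst a1. destruct (classic (forall x, v1 x = 0)) as [Z|NZ].
    + apply (Hf v1 c1); auto. apply insupp0; auto.
    + exfalso. destruct (Neg v1 D1 NZ) as [d [Hd Pd]].
      apply (along X 0 v1 c1 a2 v2 c2 alpha d); auto; try lra; left; nra.
  - subst a1 a2.
    destruct (classic (forall x, v1 x = 0)) as [Z1|NZ1].
    { apply (Hf v1 c1); auto. apply insupp0; auto. }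
    destruct (classic (forall x, v2 x = 0)) as [Z2|NZ2].
    { apply (Hg v2 c2); auto. apply insupp0; auto. }
    assert (Hphi : forall a v c x, a = 0 -> phi_eval X a v c x = v x + c).
    { intros; subst; unfold phi_eval; ring. }
    pose proof NZ1 as NZ1'. apply not_all_ex_not in NZ1'. destruct NZ1' as [x0 Hk].
    set (k := v1 x0) in *.
    set (rho := v2 x0 / k).
    assert (Prop2 : forall y, v2 y = rho * v1 y).
    { intro y. set (z := hadd X y (hscal X (-(v1 y / k)) x0)).
      assert (Ez1 : v1 z = 0).
      { unfold z. destruct D1 as [Ha [Hs _]]. rewrite Ha, Hs. fold k. field. auto. }
      assert (Ez2 : v2 z = v2 y - (v1 y / k) * v2 x0).
      { unfold z. destruct D2 as [Ha [Hs _]]. rewrite Ha, Hs. ring. }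
      assert (Ez : v2 z = 0).
      { apply NNPP. intro w. set (s := (alpha - c1 - 1) / k).
        set (t := (alpha - 1 - c2 - s * v2 x0) / v2 z).
        apply (H (hadd X (hscal X t z) (hscal X s x0))).
        rewrite !Hphi by auto. rewrite !v_lin2 by auto. rewrite Ez1. fold k.
        unfold t, s. split; match goal with |- ?L < _ => replace L with (alpha - 1) by (field; try split; auto) end; lra. }
      unfold rho. rewrite Ez in Ez2. field_simplify; auto. lra. }
    destruct (Rlt_or_le rho 0) as [Rn|Rp].
    + set (mu := - rho).
      destruct Df as [x1' Dx1'].
      destruct (lemA X f v1 c1 eps He D1 (insupp0 X f v1 c1 S1) (ex_intro _ x1' Dx1')) as [x1 [Dx1 E1]].
      destruct (lemA X g v2 c2 eps He D2 (insupp0 X g v2 c2 S2) Dg) as [x2 [Dx2 E2]].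
      exists x1, x2. split; [auto|split; [auto|]].
      exists [(mu / (1 + mu), (0, v1)); (1 / (1 + mu), (0, v2))].
      split; [discriminate|]. split.
      * constructor; [simpl; split; [apply Rle_mult_inv_pos; unfold mu; lra|auto]|].
        constructor; [simpl; split; [apply Rle_mult_inv_pos; unfold mu; lra|auto]|constructor].
      * simpl. split; [field; unfold mu; lra|]. split; [ring|].
        intro x. rewrite Prop2. unfold mu. field. lra.
    + exfalso. destruct Rp as [Rp|R0].
      * apply (along X 0 v1 c1 0 v2 c2 alpha (hscal X (-1 / k) x0)); auto; try lra; right.
        -- destruct D1 as [_ [Hs _]]. rewrite Hs. fold k. field_simplify; auto; lra.
        -- rewrite Prop2. destruct D1 as [_ [Hs _]]. rewrite Hs. fold k.
           field_simplify; auto; lra.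
      * apply NZ2. intro x. rewrite Prop2, <- R0. ring.
Qed.
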